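(* Let $f:\mathbb{R}^n\to\overline{\mathbb{R}}$ be a proper function that is ADC associated with a sequence $\{f^k=g^k-h^k\}$ (in any of the pointwise, epigraphical or continuous senses), and let $\bar x\notin\operatorname{dom} f$. If for every sequence $x^k\to\bar x$ one has $x^k\notin\operatorname{dom} f^k$ for all sufficiently large $k$, then $\partial_A f(\bar x)=\emptyset$. Moreover, this condition on sequences is satisfied whenever $\operatorname{dom} f$ is closed and $\operatorname{dom} f^k\subset\operatorname{dom} f$ for all sufficiently large $k$.
   Context: $\overline{\mathbb{R}}=\mathbb{R}\cup\{\pm\infty\}$. A proper function $f^k:\mathbb{R}^n\to\overline{\mathbb{R}}$ is DC on its domain if there are proper, lsc, convex $g^k,h^k:\mathbb{R}^n\to\overline{\mathbb{R}}$ with $\operatorname{dom} f^k=\operatorname{dom} g^k\cap\operatorname{dom} h^k$ and $f^k=g^k-h^k$ on $\operatorname{dom} f^k$; we write $f^k=g^k-h^k$ for such a decomposition. A proper $f$ is ADC associated with $\{f^k\}$ if the $f^k$ are proper, DC on their domains, and $f^k\to f$ pointwise (p-ADC), or epigraphically (e-ADC), or continuously (c-ADC: $f^k(x^k)\to f(x)$ whenever $x^k\to x$). For sets $C^k\subset\mathbb{R}^n$, $\operatorname{Lim\,sup}_k C^k=\{u:\exists$ infinite $N\subset\mathbb{N}$ and $u^k\in C^k$ with $u^k\to u$ along $N\}$. The approximate subdifferential (associated with $\{f^k=g^k-h^k\}$) is $\partial_A f(\bar x)=\bigcup_{x^k\to\bar x}\operatorname{Lim\,sup}_{k\to\infty}[\partial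 g^k(x^k)-\partial h^k(x^k)]$, where $\partial$ is the convex subdifferential (empty outside the domain), and Minkowski sums/differences with $\emptyset$ are $\emptyset$. *)

(* Defs.v *)
From HB Require Import structures.
From mathcomp Require Import all_boot all_order all_algebra.
From mathcomp Require Import all_classical all_reals all_analysis.
Set Implicit Arguments. Unset Strict Implicit. Unset Printing Implicit Defensive.
Import Order.TTheory GRing.Theory Num.Theory.
Import numFieldNormedType.Exports.
Local Open Scope classical_set_scope.
Local Open Scope ring_scope.

Section ADC.
Variables (R : realType) (n : nat).
Notation vec := 'rV[R]_n.

Definition dotv (u v : vec) : R := (u *m v^T) 0 0.

Local Open Scope ereal_scope.

Definition dom (f : vec -> \bar R) : set vec := [set x | f x < +oo].

Definition eproper (f : vec -> \bar R) : Prop :=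
  (forall x, f x != -oo) /\ dom f !=set0.

Definition econvex (f : vec -> \bar R) : Prop :=
  forall (x y : vec) (t : R), (0 < t < 1)%R ->
    f (t *: x + (1 - t) *: y)%R <= t%:E * f x + (1 - t)%:E * f y.

Definition plc_convex (f : vec -> \bar R) : Prop :=
  eproper f /\ lower_semicontinuous f /\ econvex f.

Definition DC_decomp (f g h : vec -> \bar R) : Prop :=
  plc_convex g /\ plc_convex h /\ dom f = dom g `&` dom h /\
  (forall x, dom f x -> f x = g x - h x).

(* convex subdifferential (empty outside the domain) *)
Definition csubdiff (g : vec -> \bar R) (x : vec) : set vec :=
  [set v | g x \is a fin_num /\ forall y, g x + (dotv v (y - x)%R)%:E <= g y].

Definition mdiff (A B : set vec) : set vec :=
  [set w | exists a b, A a /\ B b /\ w = (a - b)%R].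

Definition pconv (fk : nat -> vec -> \bar R) (f : vec -> \bar R) : Prop :=
  forall x, (fun k => fk k x) @ \oo --> f x.

Definition econv (fk : nat -> vec -> \bar R) (f : vec -> \bar R) : Prop :=
  forall x,
    (forall xk : nat -> vec, xk @ \oo --> x ->
        f x <= limn_einf (fun k => fk k (xk k))) /\
    (exists2 xk : nat -> vec, xk @ \oo --> x &
        limn_esup (fun k => fk k (xk k)) <= f x).

Definition cconv (fk : nat -> vec -> \bar R) (f : vec -> \bar R) : Prop :=
  forall x (xk : nat -> vec), xk @ \oo --> x ->
    (fun k => fk k (xk k)) @ \oo --> f x.

Definition ADC (f : vec -> \bar R) (fk gk hk : nat -> vec -> \bar R) : Prop :=
  (forall k, eproper (fk k)) /\ (forall k, DC_decomp (fk k) (gk k) (hk k)) /\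
  (pconv fk f \/ econv fk f \/ cconv fk f).

Definition Limsup_set (C : nat -> set vec) : set vec :=
  [set u | exists (N : set nat) (uk : nat -> vec),
     infinite_set N /\ (forall k, N k -> C k (uk k)) /\
     (forall e : R, (0 < e)%R -> \forall k \near \oo, N k -> (`|uk k - u| < e)%R)].

Definition approx_subdiff (gk hk : nat -> vec -> \bar R) (xbar : vec) : set vec :=
  [set v | exists2 xk : nat -> vec, xk @ \oo --> xbar &
     Limsup_set (fun k => mdiff (csubdiff (gk k) (xk k)) (csubdiff (hk k) (xk k))) v].

End ADC.

(* Main.v *)
Require Import Defs.
From HB Require Import structures.
From mathcomp Require Import all_boot all_order all_algebra.
From mathcomp Require Import all_classical all_reals all_analysis.
Import Order.TTheory GRing.Theory Num.Theory.
Import numFieldNormedType.Exports.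
Local Open Scope classical_set_scope.
Local Open Scope ring_scope.

Theorem proposition2p4 (R : realType) (n : nat)
    (f : 'rV[R]_n -> \bar R) (fk gk hk : nat -> 'rV[R]_n -> \bar R)
    (xbar : 'rV[R]_n) :
  eproper f -> ADC f fk gk hk -> ~ dom f xbar ->
  ((forall xk : nat -> 'rV[R]_n, xk @ \oo --> xbar ->
      \forall k \near \oo, ~ dom (fk k) (xk k)) ->
     approx_subdiff gk hk xbar = set0) /\
  (closed (dom f) -> (\forall k \near \oo, dom (fk k) `<=` dom f) ->
     forall xk : nat -> 'rV[R]_n, xk @ \oo --> xbar ->
       \forall k \near \oo, ~ dom (fk k) (xk k)).
Proof.
move=> _ [_ [DCk _]] ndom; split.
  move=> H; apply/seteqP; split=> // v [xk xkx [N [uk [Ninf [NC _]]]]].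
  have [M _ HM] := H xk xkx.
  apply: Ninf; apply: (sub_finite_set _ (finite_II M)) => k Nk /=.
  rewrite ltnNge; apply/negP => Mk.
  apply: (HM k Mk).
  have [a [b [ga [hb _]]]] := NC k Nk.
  have [ga1 _] := ga; have [hb1 _] := hb.
  have [_ [_ [-> _]]] := DCk k; split.
  + by move/fin_numPlt: ga1 => /andP[].
  + by move/fin_numPlt: hb1 => /andP[].
move=> cl Hsub xk xkx.
have hC : nbhs xbar (~` dom f) by apply: open_nbhs_nbhs; split => //; apply: closed_openC.
have ev := xkx _ hC.
have ev2 : \forall k \near \oo, (~` dom f) (xk k) := ev.
move: ev2 Hsub; apply: filterS2 => k nd sub hd; exact: nd (sub _ hd).
Qed.
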